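(* In $Y_R(\mathfrak{so}_3)$: $$3e_{-1,1}(u+\tfrac12)-e_{-1,1}(u)+3e_{-1,0}(u+\tfrac12)e_{-1,0}(u)-2e_{-1,0}(u)^2=0.$$
   Context: Let $e_{ij}$ ($i,j\in\{-1,0,1\}$) be the matrix units of $\mathrm{End}\,\mathbb{C}^3$, with rows and columns indexed by $-1,0,1$. Let $P=\sum_{i,j}e_{ij}\otimes e_{ji}$, $Q=\sum_{i,j}e_{ij}\otimes e_{-i,-j}$ and $R(u)=1-\frac{P}{u}+\frac{Q}{u-\frac12}$. Let $t$ be the transposition on $\mathrm{End}\,\mathbb{C}^3$ given by $(e_{ij})^t=e_{-j,-i}$. The algebra $Y_R(\mathfrak{so}_3)$ is the unital associative algebra over $\mathbb{C}$ generated by elements $t_{ij}^{(r)}$, $r\ge 1$, $i,j\in\{-1,0,1\}$; put $t_{ij}(u)=\delta_{ij}+\sum_{r\ge1}t^{(r)}_{ij}u^{-r}$, $T(u)=\sum_{i,j}t_{ij}(u)\otimes e_{ij}$, $T^t(u)=\sum_{i,j}t_{ij}(u)\otimes e_{-j,-i}$, $T_1(u)=\sum t_{ij}(u)\otimes e_{ij}\otimes 1$, $T_2(v)=\sum t_{ij}(v)\otimes 1\otimes e_{ij}$. The defining relations are $R(u-v)T_1(u)T_2(v)=T_2(v)T_1(u)R(u-v)$ and $T(u)T^t(u+\frac12)=T^t(u+\frac12)T(u)=1$. The Gauss generators are the unique series $k_i(u)\in 1+u^{-1}Y_R(\mathfrak{so}_3)[[u^{-1}]]$ ($i=-1,0,1$)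 and $e_{ij}(u),f_{ji}(u)\in u^{-1}Y_R(\mathfrak{so}_3)[[u^{-1}]]$ ($-1\le i<j\le1$) such that $T(u)=F(u)K(u)E(u)$, where $F(u)$ is the lower unitriangular matrix with below-diagonal entries $F_{0,-1}=f_{0,-1}(u)$, $F_{1,-1}=f_{1,-1}(u)$, $F_{1,0}=f_{1,0}(u)$, $K(u)=\mathrm{diag}(k_{-1}(u),k_0(u),k_1(u))$, and $E(u)$ is the upper unitriangular matrix with above-diagonal entries $E_{-1,0}=e_{-1,0}(u)$, $E_{-1,1}=e_{-1,1}(u)$, $E_{0,1}=e_{01}(u)$ (rows/columns indexed by $-1,0,1$). *)

(* Defs.v *)
From HB Require Import structures.
From mathcomp Require Import all_boot all_order all_algebra.
Set Implicit Arguments. Unset Strict Implicit. Unset Printing Implicit Defensive.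
Import Order.TTheory GRing.Theory Num.Theory.
Local Open Scope ring_scope.

(* Index convention: the index set {-1,0,1} is encoded by 'I_3 via
   0 <-> -1, 1 <-> 0, 2 <-> 1 (order preserving).  Negation i |-> -i is rev_ord. *)
Notation I3 := 'I_3.
Definition negI (i : I3) : I3 := rev_ord i.

Section Yangian.
Variables (F : numClosedFieldType) (A : algType F).

(* A formal series in 1 + u^{-1}A[[u^{-1}]] or u^{-1}A[[u^{-1}]] is represented
   by its coefficient sequence: s n is the coefficient of u^{-n}. *)
Definition ser := nat -> A.

Definition mulser (s1 s2 : ser) : ser :=
  fun n => \sum_(k < n.+1) s1 k * s2 (n - k)%N.

(* Coefficient of u^{-n} in (u + c)^{-r}, expanded in u^{-1}. *)
Definition shc (c : F) (r n : nat) : F :=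
  if r == 0%N then (n == 0%N)%:R
  else if (r <= n)%N then (-1) ^+ (n - r) * ('C(n.-1, n - r))%:R * c ^+ (n - r)
  else 0.

(* s(u + c), re-expanded as a series in u^{-1}. *)
Definition shift (c : F) (s : ser) : ser :=
  fun n => \sum_(r < n.+1) shc c r n *: s r.

(* Generators t_ij^{(r)} (r >= 1) are given by t i j r; the series t_ij(u). *)
Definition tser (t : I3 -> I3 -> nat -> A) (i j : I3) : ser :=
  fun r => if r == 0%N then (i == j)%:R else t i j r.

(* Two-variable coefficient functions: f m n = coefficient of u^{-m} v^{-n},
   m n : int (coefficient zero when an exponent is positive). *)
Definition tz (t : I3 -> I3 -> nat -> A) (i j : I3) (k : int) : A :=
  match k with Posz n => tser t i j n | Negz _ => 0 end.

(* multiplication by w = u - v *)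
Definition wop (f : int -> int -> A) : int -> int -> A :=
  fun m n => f (m + 1) n - f m (n + 1).
(* multiplication by w - 1/2 *)
Definition wop1 (f : int -> int -> A) : int -> int -> A :=
  fun m n => wop f m n - (2%:R : F)^-1 *: f m n.

(* Entry ((i,j),(k,l)) of Rt(w) = w(w-1/2) R(w) = w(w-1/2) - (w-1/2) P + w Q,
   acting (by multiplication) on a coefficient function f.  Here
   (e_ik (x) e_jl) has P-entry [i=l][j=k] and Q-entry [j=-i][l=-k]. *)
Definition Rop (i j k l : I3) (f : int -> int -> A) : int -> int -> A :=
  fun m n =>
    (if (i == k) && (j == l) then wop (wop1 f) m n else 0)
  - (if (i == l) && (j == k) then wop1 f m n else 0)
  + (if (j == negI i) && (l == negI k) then wop f m n else 0).

(* RTT relation, multiplied by (u-v)(u-v-1/2):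
   Rt(u-v) T1(u) T2(v) = T2(v) T1(u) Rt(u-v), entry ((a,b),(c,d)),
   with (T1(u)T2(v))_{(p,q),(c,d)} = t_pc(u) t_qd(v) and
   (T2(v)T1(u))_{(a,b),(p,q)} = t_bq(v) t_ap(u). *)
Definition RTT_rel (t : I3 -> I3 -> nat -> A) : Prop :=
  forall (a b c d : I3) (m n : int),
    \sum_(p : I3) \sum_(q : I3)
        Rop a b p q (fun x y => tz t p c x * tz t q d y) m n
  = \sum_(p : I3) \sum_(q : I3)
        Rop p q c d (fun x y => tz t b q y * tz t a p x) m n.

(* T(u) T^t(u+1/2) = 1 = T^t(u+1/2) T(u), where (T^t)_{ab}(u) = t_{-b,-a}(u). *)
Definition unitary_rel (t : I3 -> I3 -> nat -> A) : Prop :=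
  (forall (a c : I3) (n : nat),
     \sum_(b : I3) mulser (tser t a b) (shift (2%:R^-1) (tser t (negI c) (negI b))) n
     = ((a == c) && (n == 0%N))%:R)
  /\
  (forall (a c : I3) (n : nat),
     \sum_(b : I3) mulser (shift (2%:R^-1) (tser t (negI b) (negI a))) (tser t b c) n
     = ((a == c) && (n == 0%N))%:R).

(* Gauss decomposition T(u) = F(u) K(u) E(u).
   k i : series of k_i(u) (constant term 1); e i j (i < j) : series e_ij(u);
   f i j (i > j) : series f_ij(u) (constant term 0). *)
Definition Fser (f : I3 -> I3 -> ser) (i j : I3) : ser :=
  if i == j then (fun r => (r == 0%N)%:R)
  else if (j < i)%N then f i j else (fun _ => 0).
Definition Eser (e : I3 -> I3 -> ser) (i j : I3) : ser :=
  if i == j then (fun r => (r == 0%N)%:R)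
  else if (i < j)%N then e i j else (fun _ => 0).

Definition gauss_decomp (t : I3 -> I3 -> nat -> A)
  (k : I3 -> ser) (e f : I3 -> I3 -> ser) : Prop :=
  (forall i, k i 0%N = 1) /\
  (forall i j : I3, (i < j)%N -> e i j 0%N = 0) /\
  (forall i j : I3, (j < i)%N -> f i j 0%N = 0) /\
  (forall (i j : I3) (n : nat),
     tser t i j n = \sum_(m : I3) mulser (mulser (Fser f i m) (k m)) (Eser e m j) n).

End Yangian.

(* Main.v *)
Require Import Defs.
From HB Require Import structures.
From mathcomp Require Import all_boot all_order all_algebra.
From mathcomp Require Import zify ring.
From Stdlib Require Import FunctionalExtensionality.
Import Order.TTheory GRing.Theory Num.Theory.
Local Open Scope ring_scope.

Module Aux.
Set Implicit Arguments. Unset Strict Implicit. Unset Printing Implicit Defensive.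


Section Sums.
Variable V : zmodType.

Lemma sum_widen (m n : nat) (G : nat -> V) : (m <= n)%N ->
  (forall i, (m <= i < n)%N -> G i = 0) ->
  \sum_(i < m) G i = \sum_(i < n) G i.
Proof.
move=> mn H; rewrite -!(big_mkord xpredT) (@big_cat_nat _ _ _ m 0 n _ _ (leq0n m) mn) /=.
rewrite [X in _ = _ + X]big_nat_cond [X in _ = _ + X]big1 ?addr0 //.
by move=> i /andP [] /H.
Qed.

Lemma tri (n : nat) (G : nat -> nat -> V) :
  \sum_(k < n.+1) \sum_(i < k.+1) G i (k - i)%N
  = \sum_(i < n.+1) \sum_(j < (n - i).+1) G i j.
Proof.
elim: n => [|n IH]; first by rewrite !big_ord_recl !big_ord0.
rewrite big_ord_recr /= IH.
have E : forall i : 'I_n.+2, \sum_(j < (n.+1 - i).+1) G i j =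
   (\sum_(j < (n - i).+1) G i j) *+ (i < n.+1)%N + G i (n.+1 - i)%N.
  move=> i; rewrite big_ord_recr /=; congr (_ + _).
  case: (ltnP i n.+1) => hi.
    by rewrite mulr1n subSn // -ltnS.
  have -> : (n.+1 - i = 0)%N by lia.
  by rewrite big_ord0 mulr0n.
rewrite (eq_bigr _ (fun i _ => E i)) big_split /=; congr (_ + _).
rewrite [RHS]big_ord_recr /= ltnn mulr0n addr0; apply: eq_bigr => i _.
by rewrite ltn_ord mulr1n.
Qed.
End Sums.

Section Shc.
Variable F : numClosedFieldType.
Implicit Types c : F.

Lemma shc0n c n : shc c 0 n = (n == 0)%:R. Proof. by []. Qed.
Lemma shcn0 c r : shc c r 0 = (r == 0)%:R. Proof. by case: r. Qed.
Lemma shc_big c r n : (n < r)%N -> shc c r n = 0.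
Proof. by rewrite /shc; case: r => // r; rewrite ltnNge => /negbTE ->. Qed.
Lemma shc_form c r n : (0 < r)%N -> (r <= n)%N ->
  shc c r n = (-1) ^+ (n - r) * ('C(n.-1, n - r))%:R * c ^+ (n - r).
Proof. by rewrite /shc; case: r => // r _ ->. Qed.

Lemma shc_rec c j M : (0 < j)%N -> shc c j M.+1 + c * shc c j M = shc c j.-1 M.
Proof.
case: j => // -[_|j _] /=.
  rewrite shc0n shc_form // subn1 /= binn mulr1.
  case: M => [|m]; first by rewrite shcn0 /= mulr0 addr0 expr0 mul1r.
  rewrite shc_form // subn1 /= binn mulr1 !exprS.
  by rewrite mulrCA mulrA mulN1r -mulrA addrC mulNr mulrN subrr.
have [hM|hM|hM] := ltngtP M j.+1.
- rewrite !shc_big ?mulr0 ?addr0 //; lia.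
- have -> : M = (j.+2 + (M - j.+2))%N by lia.
  set e := (M - j.+2)%N.
  rewrite !shc_form //; try lia.
  have -> : ((j.+2 + e).+1 - j.+2 = e.+1)%N by lia.
  have -> : ((j.+2 + e) - j.+2 = e)%N by lia.
  have -> : ((j.+2 + e) - j.+1 = e.+1)%N by lia.
  have -> : ((j.+2 + e).+1.-1 = (j.+1 + e).+1)%N by lia.
  have -> : ((j.+2 + e).-1 = (j.+1 + e))%N by lia.
  rewrite binS natrD !exprS.
  rewrite mulrDr mulrDl; set x := (-1) ^+ e; set y := c ^+ e.
  set a := ('C(_, e.+1))%:R; set b := ('C(_, e))%:R.
  ring.
- subst M; rewrite [shc c j.+2 j.+1]shc_big // mulr0 addr0 !shc_form //.
  by rewrite !subnn /= expr0 !mul1r !mulr1 !bin0.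
Qed.
End Shc.
Section Vand.
Variable F : numClosedFieldType.
Implicit Types c : F.
Lemma shc_vand c n i j :
  \sum_(k < n.+1) shc c i k * shc c j (n - k)%N = shc c (i + j) n.
Proof.
elim: n i j => [|n IH] i j.
  rewrite big_ord_recl big_ord0 addr0 /= !shcn0 addn_eq0.
  by case: (i == 0%N); case: (j == 0%N); rewrite ?mulr0 ?mulr1 ?mul0r.
case: j => [|j].
  rewrite big_ord_recr /= subnn shcn0 mulr1 addn0 big1 ?add0r // => k _.
  by rewrite shc0n subn_eq0 leqNgt ltn_ord /= mulr0.
rewrite big_ord_recr /= subnn shcn0 mulr0 addr0.
have E : forall k : 'I_n.+1, shc c i k * shc c j.+1 (n.+1 - k)%N =
   shc c i k * shc c j (n - k)%N - c * (shc c i k * shc c j.+1 (n - k)%N).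
  move=> k; rewrite subSn ?(leq_ord k) //.
  rewrite -(@shc_rec F c j.+1 (n - k)%N isT) /=.
  by rewrite mulrDr mulrCA addrK.
rewrite (eq_bigr _ (fun k _ => E k)) sumrB -mulr_sumr !IH.
have := @shc_rec F c (i + j).+1 n isT; rewrite /= -addnS => <-.
by rewrite addrK.
Qed.
End Vand.


Section Ser.
Variables (F : numClosedFieldType) (A : algType F).
Implicit Types a b s : ser A.

Lemma mulserA a b s : mulser (mulser a b) s = mulser a (mulser b s).
Proof.
apply: functional_extensionality => n; rewrite /mulser.
pose G i j := a i * b j * s (n - (i + j))%N.
transitivity (\sum_(k < n.+1) \sum_(i < k.+1) G i (k - i)%N).
  apply: eq_bigr => k _; rewrite mulr_suml; apply: eq_bigr => i _.
  by rewrite /G subnKC // -ltnS.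
rewrite tri; apply: eq_bigr => i _; rewrite mulr_sumr; apply: eq_bigr => j _.
by rewrite /G mulrA subnDA.
Qed.

Lemma mulser_linl (x y : F) s1 s2 b n :
  mulser (fun m => x *: s1 m + y *: s2 m) b n = x *: mulser s1 b n + y *: mulser s2 b n.
Proof.
rewrite /mulser !scaler_sumr -big_split; apply: eq_bigr => i _.
by rewrite mulrDl -!scalerAl.
Qed.

Lemma mulser_linr (x y : F) s1 s2 b n :
  mulser b (fun m => x *: s1 m + y *: s2 m) n = x *: mulser b s1 n + y *: mulser b s2 n.
Proof.
rewrite /mulser !scaler_sumr -big_split; apply: eq_bigr => i _.
by rewrite mulrDr -!scalerAr.
Qed.

Definition z2 s : ser A := fun n => if n is k.+2 then s k else 0.

Lemma mulser_z2 a b : mulser (z2 a) b = z2 (mulser a b).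
Proof.
apply: functional_extensionality => n; rewrite /mulser /z2.
case: n => [|[|n]].
- by rewrite big_ord_recl big_ord0 mul0r addr0.
- by rewrite !big_ord_recl big_ord0 !mul0r !addr0.
by rewrite !big_ord_recl /= !mul0r !add0r.
Qed.

Lemma shift_mul (c : F) a b :
  shift c (mulser a b) = mulser (shift c a) (shift c b).
Proof.
apply: functional_extensionality => n; rewrite /mulser /shift.
pose G i j := shc c (i + j)%N n *: (a i * b j).
transitivity (\sum_(i < n.+1) \sum_(j < n.+1) G i j).
  transitivity (\sum_(k < n.+1) \sum_(i < k.+1) G i (k - i)%N).
    apply: eq_bigr => k _; rewrite scaler_sumr; apply: eq_bigr => i _.
    by rewrite /G subnKC // -ltnS.
  rewrite tri; apply: eq_bigr => i _; apply: sum_widen; first by lia.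
  by move=> j /andP [hj _]; rewrite /G shc_big ?scale0r //; lia.
symmetry.
transitivity (\sum_(k < n.+1) \sum_(i < n.+1) \sum_(j < n.+1)
     (shc c i k * shc c j (n - k)%N) *: (a i * b j)).
  apply: eq_bigr => k _; rewrite mulr_suml.
  rewrite (@sum_widen _ k.+1 n.+1 (fun i => shc c i k *: a i *
     \sum_(r < (n - k).+1) shc c r (n - k) *: b r)); last 2 first.
  - by rewrite ltnS -ltnS.
  - by move=> i /andP [hi _]; rewrite shc_big ?scale0r ?mul0r.
  apply: eq_bigr => i _; rewrite mulr_sumr.
  rewrite (@sum_widen _ (n - k).+1 n.+1 (fun j => shc c i k *: a i * (shc c j (n - k) *: b j))); last 2 first.
  - by rewrite ltnS leq_subr.
  - by move=> j /andP [hj _]; rewrite (@shc_big _ c j) ?scale0r ?mulr0.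
  apply: eq_bigr => j _.
  by rewrite -scalerAl -scalerAr scalerA.
rewrite exchange_big; apply: eq_bigr => i _; rewrite exchange_big.
apply: eq_bigr => j _; rewrite -scaler_suml.
by rewrite shc_vand.
Qed.

Definition dser : ser A := fun r => (r == 0)%:R.
Lemma mulser1 s : mulser s dser = s.
Proof.
apply: functional_extensionality => n; rewrite /mulser big_ord_recr /= subnn mulr1.
rewrite big1 ?add0r // => i _; rewrite /dser subn_eq0 leqNgt ltn_ord /= mulr0 //.
Qed.
Lemma mul1ser s : mulser dser s = s.
Proof.
apply: functional_extensionality => n; rewrite /mulser big_ord_recl /= subn0 mul1r.
by rewrite big1 ?addr0 // => i _; rewrite /dser /= mul0r.
Qed.
Lemma mul0ser s : mulser (fun _ => 0) s = (fun _ => 0).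
Proof. by apply: functional_extensionality => n; rewrite /mulser big1 // => i _; rewrite mul0r. Qed.
Lemma mulser0 s : mulser s (fun _ => 0) = (fun _ => 0).
Proof. by apply: functional_extensionality => n; rewrite /mulser big1 // => i _; rewrite mulr0. Qed.

Lemma mulser_cancel (P T : ser A) : P 0%N = 0 -> P 1%N = 0 -> P 2%N = 1 ->
  (forall n, mulser P T n = 0) -> forall n, T n = 0.
Proof.
move=> P0 P1 P2 H n; elim: n {-2}n (leqnn n) => [|n IH] m hm.
  have -> : m = 0%N by lia.
  move: (H 2%N); rewrite /mulser !big_ord_recl big_ord0 /= P0 P1 P2.
  by rewrite !mul0r add0r mul1r addr0 add0r; apply.
move: (H m.+2); rewrite /mulser !big_ord_recl /= P0 P1 P2 !mul0r !add0r mul1r.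
rewrite big1; first by rewrite addr0 /bump /= !subSS subn0; apply.
move=> i _; rewrite IH ?mulr0 //; rewrite /bump /=; lia.
Qed.
End Ser.


Lemma sum_shift1 (V : zmodType) (B : nat) (h : nat -> V) :
  \sum_(i < B) h i.+1 = \sum_(i < B) h i + h B - h 0%N.
Proof.
rewrite (_ : \sum_(i < B) h i.+1 = \sum_(i < B.+1) h i - h 0%N).
  by rewrite big_ord_recr.
by rewrite big_ord_recl addrC addKr.
Qed.

Section Phi.
Variables (F : numClosedFieldType) (A : algType F).
Variable c : F.

Lemma phi_wop_nat (N : nat) (g : nat -> nat -> A) :
  (forall j, g 0%N j = 0) -> (forall i, g i 0%N = 0) ->
  \sum_(i < N.+3) \sum_(j < N.+3) shc c j (N.+2 - i) *: (g i.+1 j - g i j.+1)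
  = - c *: \sum_(i < N.+3) \sum_(j < N.+3) shc c j (N.+2 - i) *: g i j.
Proof.
move=> g0 g0'.
transitivity (\sum_(i < N.+3) \sum_(j < N.+3) shc c j (N.+3 - i.+1) *: g i.+1 j
  - \sum_(i < N.+3) \sum_(j < N.+3) shc c j.+1.-1 (N.+2 - i) *: g i j.+1).
  rewrite -sumrB; apply: eq_bigr => i _; rewrite -sumrB.
  by apply: eq_bigr => j _; rewrite scalerBr.
rewrite [X in X - _ = _]exchange_big.
under eq_bigr => j _ do rewrite (@sum_shift1 _ _ (fun i => shc c j (N.+3 - i) *: g i j)).
under [X in _ - X = _]eq_bigr => i _ do
  rewrite (@sum_shift1 _ _ (fun j => shc c j.-1 (N.+2 - i) *: g i j)).
rewrite /= !big_split /=.
have Z2 : \sum_(i < N.+3) shc c i (N.+3 - N.+3) *: g N.+3 i = 0.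
  apply: big1 => j _; rewrite subnn shcn0.
  by case: (nat_of_ord j) => [|k] /=; rewrite ?g0' ?scaler0 ?scale0r.
have Z3 : \sum_(i < N.+3) - (shc c i (N.+3 - 0) *: g 0%N i) = 0.
  by apply: big1 => j _; rewrite g0 scaler0 oppr0.
have Z5 : \sum_(i < N.+3) shc c N.+2 (N.+2 - i) *: g i N.+3 = 0.
  apply: big1 => i _; case: (nat_of_ord i) => [|k]; first by rewrite g0 scaler0.
  by rewrite shc_big ?scale0r //; lia.
have Z6 : \sum_(i < N.+3) - (shc c 0 (N.+2 - i) *: g i 0%N) = 0.
  by apply: big1 => j _; rewrite g0' scaler0 oppr0.
rewrite Z2 Z3 Z5 Z6 !addr0.
rewrite exchange_big -sumrB scaler_sumr; apply: eq_bigr => i _.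
rewrite -sumrB scaler_sumr; apply: eq_bigr => j _.
case: (nat_of_ord j) => [|k]; first by rewrite g0' !scaler0 subr0.
rewrite -scalerBl scalerA subSn ?(leq_ord i) // -(@shc_rec F c k.+1) //=.
by rewrite opprD addNKr mulNr.
Qed.
End Phi.

Section Phi2.
Variables (F : numClosedFieldType) (A : algType F).
Variable c : F.

Definition zer (s : ser A) (k : int) : A :=
  match k with Posz n => s n | Negz _ => 0 end.

Definition phi (f : int -> int -> A) (N : nat) : A :=
  \sum_(i < N.+3) \sum_(j < N.+3) shc c j (N.+2 - i) *: f (i%:Z - 2) (j%:Z - 2).

Lemma zer_m2 (s : ser A) (i : nat) : zer s (i%:Z - 2) = z2 s i.
Proof.
case: i => [|[|k]] //.
have -> : (k.+2)%:Z - 2 = k%:Z by rewrite -addn2 PoszD addrK.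
by [].
Qed.

Lemma intS (i : nat) : i%:Z - 2 + 1 = (i.+1)%:Z - 2.
Proof. lia. Qed.

Lemma phi_wop (f : int -> int -> A) N :
  (forall y, f (-2) y = 0) -> (forall x, f x (-2) = 0) ->
  phi (wop f) N = - c *: phi f N.
Proof.
move=> h1 h2; rewrite /phi /wop.
under eq_bigr do under eq_bigr do rewrite !intS.
apply: (@phi_wop_nat F A c N (fun i j => f (i%:Z - 2) (j%:Z - 2))) => [j|i].
  by rewrite sub0r h1.
by rewrite sub0r h2.
Qed.

Lemma mulser_rev (s1 s2 : ser A) n :
  mulser s1 s2 n = \sum_(i < n.+1) s1 (n - i)%N * s2 i.
Proof.
rewrite /mulser (reindex_inj rev_ord_inj) /=; apply: eq_bigr => i _.
by rewrite subSS subKn // -ltnS.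
Qed.

Lemma phi_base (a b : ser A) N :
  phi (fun x y => zer a x * zer b y) N = mulser a (shift c (z2 b)) N.
Proof.
rewrite /phi; under eq_bigr do under eq_bigr do rewrite !zer_m2.
rewrite big_ord_recl big1 ?add0r; last by move=> j _; rewrite /= mul0r scaler0.
rewrite big_ord_recl big1 ?add0r; last by move=> j _; rewrite /= mul0r scaler0.
rewrite /mulser; apply: eq_bigr => i _; rewrite /shift mulr_sumr /=.
rewrite (@sum_widen _ (N - i).+1 N.+3 (fun j => a i * (shc c j (N - i) *: z2 b j))); last 2 first.
- lia.
- by move=> j /andP [hj _]; rewrite shc_big ?scale0r ?mulr0.
apply: eq_bigr => j _; rewrite -scalerAr /bump /= !add1n subSS.
by [].
Qed.

Lemma phi_base2 (a b : ser A) N :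
  phi (fun x y => zer b y * zer a x) N = mulser (shift c (z2 b)) a N.
Proof.
rewrite /phi; under eq_bigr do under eq_bigr do rewrite !zer_m2.
rewrite big_ord_recl big1 ?add0r; last by move=> j _; rewrite /= mulr0 scaler0.
rewrite big_ord_recl big1 ?add0r; last by move=> j _; rewrite /= mulr0 scaler0.
rewrite mulser_rev; apply: eq_bigr => i _; rewrite /shift mulr_suml /=.
rewrite (@sum_widen _ (N - i).+1 N.+3 (fun j => (shc c j (N - i) *: z2 b j) * a i)); last 2 first.
- lia.
- by move=> j /andP [hj _]; rewrite shc_big ?scale0r ?mul0r.
apply: eq_bigr => j _; rewrite -scalerAl /bump /= !add1n subSS.
by [].
Qed.

Lemma phi_lin (x y : F) (f g : int -> int -> A) N :
  phi (fun m n => x *: f m n + y *: g m n) N = x *: phi f N + y *: phi g N.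
Proof.
rewrite /phi !scaler_sumr -big_split; apply: eq_bigr => i _.
rewrite !scaler_sumr -big_split; apply: eq_bigr => j _.
by rewrite scalerDr !scalerA mulrC [y * _]mulrC -!scalerA.
Qed.
End Phi2.

Section T.
Variables (F : numClosedFieldType) (A : algType F).
Definition o1 : I3 := lift ord0 (ord0 : 'I_2).
Definition o2 : I3 := lift ord0 (lift ord0 (ord0 : 'I_1)).
Lemma lhs_form (G : I3 -> I3 -> int -> int -> A) m n :
  \sum_(p : I3) \sum_(q : I3) Rop ord0 ord0 p q (G p q) m n
  = wop (wop1 (G ord0 ord0)) m n - wop1 (G ord0 ord0) m n.
Proof. by rewrite !big_ord_recl !big_ord0 /Rop /= !subr0 !addr0. Qed.
Lemma rhs0 (G : I3 -> I3 -> int -> int -> A) m n :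
  \sum_(p : I3) \sum_(q : I3) Rop p q ord0 ord0 (G p q) m n
  = wop (wop1 (G ord0 ord0)) m n - wop1 (G ord0 ord0) m n.
Proof. by rewrite !big_ord_recl !big_ord0 /Rop /= !subr0 !addr0. Qed.
Lemma rhs1 (G : I3 -> I3 -> int -> int -> A) m n :
  \sum_(p : I3) \sum_(q : I3) Rop p q ord0 o1 (G p q) m n
  = wop (wop1 (G ord0 o1)) m n - wop1 (G o1 ord0) m n.
Proof. by rewrite !big_ord_recl !big_ord0 /Rop /= !subr0 !addr0 !add0r. Qed.
Lemma rhs2 (G : I3 -> I3 -> int -> int -> A) m n :
  \sum_(p : I3) \sum_(q : I3) Rop p q ord0 o2 (G p q) m n
  = wop (wop1 (G ord0 o2)) m n - wop1 (G o2 ord0) m n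
    + (wop (G ord0 o2) m n + wop (G o1 o1) m n + wop (G o2 ord0) m n).
Proof.
rewrite !big_ord_recl !big_ord0 /Rop /o1 /o2; move: (@wop F A) (@wop1 F A) => W W1 /=.
rewrite !subr0 !addr0 !add0r -!addrA; congr (_ + _).
by rewrite (addrCA (W (G (lift ord0 ord0) _) m n)) addrCA.
Qed.
End T.

Section Rel.
Variables (F : numClosedFieldType) (A : algType F).
Local Notation c := (2%:R^-1 : F).

Lemma phi_sub (f g : int -> int -> A) N :
  phi c (fun m n => f m n - g m n) N = phi c f N - phi c g N.
Proof.
rewrite /phi -sumrB; apply: eq_bigr => i _; rewrite -sumrB; apply: eq_bigr => j _.
by rewrite scalerBr.
Qed.
Lemma phi_add (f g : int -> int -> A) N :
  phi c (fun m n => f m n + g m n) N = phi c f N + phi c g N.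
Proof.
rewrite /phi -big_split; apply: eq_bigr => i _; rewrite -big_split; apply: eq_bigr => j _.
by rewrite scalerDr.
Qed.
Lemma phi_scl (x : F) (f : int -> int -> A) N :
  phi c (fun m n => x *: f m n) N = x *: phi c f N.
Proof.
rewrite /phi scaler_sumr; apply: eq_bigr => i _; rewrite scaler_sumr; apply: eq_bigr => j _.
by rewrite !scalerA mulrC.
Qed.

Lemma phi_add3 (f g h : int -> int -> A) N :
  phi c (fun m n => f m n + g m n + h m n) N = phi c f N + phi c g N + phi c h N.
Proof. by rewrite phi_add phi_add. Qed.

Definition supp (g : int -> int -> A) := (forall y, g (-2) y = 0) /\ (forall x, g x (-2) = 0).

Lemma supp_wop1 g : supp g -> (forall y, g (-1) y = 0) -> (forall x, g x (-1) = 0) -> supp (wop1 g).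
Proof.
move=> [h1 h2] h3 h4; split => [y|x]; rewrite /wop1 /wop.
  rewrite (_ : -2 + 1 = -1) // h1 h3 h1 scaler0; by rewrite subrr subr0.
rewrite (_ : -2 + 1 = -1) // h2 h4 h2 scaler0; by rewrite subrr subr0.
Qed.

Lemma phi_w1 g N : supp g -> phi c (wop1 g) N = (-1) *: phi c g N.
Proof.
move=> [h1 h2]; rewrite /wop1 phi_sub phi_scl phi_wop //.
by rewrite -scalerBl -opprD -mulr2n -[c *+ 2]mulr_natr mulVf ?pnatr_eq0.
Qed.

Lemma phi_ww1 g N : supp g -> supp (wop1 g) ->
  phi c (fun m n => wop (wop1 g) m n - wop1 g m n) N = (3%:R / 2%:R) *: phi c g N.
Proof.
move=> sg [h1 h2]; rewrite phi_sub phi_wop // phi_w1 // scalerA -scalerBl.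
congr (_ *: _); rewrite mulrN1 opprK.
rewrite -[3%:R]/((1 + 2)%:R) natrD mulrDl mulfV ?pnatr_eq0 //.
by rewrite opprK mul1r.
Qed.

Lemma phi_wop_s g (s : supp g) N : phi c (wop g) N = - c *: phi c g N.
Proof. by case: s => h1 h2; rewrite phi_wop. Qed.
Lemma phi_w1s g (s : supp g) N : phi c (wop1 g) N = (-1) *: phi c g N.
Proof. exact: phi_w1. Qed.

Lemma phi_wop_e g (s : supp g) N : phi c (fun m n => wop g m n) N = - c *: phi c g N.
Proof. exact: phi_wop_s. Qed.
Lemma phi_w1e g (s : supp g) N : phi c (fun m n => wop1 g m n) N = (-1) *: phi c g N.
Proof. exact: phi_w1. Qed.

Lemma zer_neg (s : ser A) : zer s (-1) = 0 /\ zer s (-2) = 0.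
Proof. by []. Qed.

Lemma supp_pair (a b : ser A) : supp (fun x y => zer a x * zer b y).
Proof. by split => [y|x] /=; rewrite ?mul0r ?mulr0. Qed.
Lemma supp_pair1 (a b : ser A) : supp (wop1 (fun x y => zer a x * zer b y)).
Proof. apply: supp_wop1; [exact: supp_pair | move=> y | move=> x] => /=; by rewrite ?mul0r ?mulr0. Qed.

End Rel.

Section Rel2.
Variables (F : numClosedFieldType) (A : algType F).
Local Notation c := (2%:R^-1 : F).
Variable t : I3 -> I3 -> nat -> A.
Hypothesis RTT : RTT_rel t.
Local Notation x d := (tser t ord0 d).
Local Notation Y d := (shift c (z2 (x d))).
Definition hh (q p : I3) : int -> int -> A := fun x y => zer (tser t ord0 q) y * zer (tser t ord0 p) x.

Lemma supp_hh q p : supp (hh q p).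
Proof. by split => [y|z] /=; rewrite /hh /= ?mul0r ?mulr0. Qed.
Lemma supp_hh1 q p : supp (wop1 (hh q p)).
Proof. apply: supp_wop1; [exact: supp_hh | move=> y | move=> z] => /=; by rewrite /hh /= ?mul0r ?mulr0. Qed.

Lemma rel_base (d : I3) N :
  (3%:R / 2%:R) *: mulser (x ord0) (Y d) N =
  phi c (fun m n => \sum_(p : I3) \sum_(q : I3) Rop p q ord0 d (hh q p) m n) N.
Proof.
have E : (fun m n => \sum_(p : I3) \sum_(q : I3)
     Rop ord0 ord0 p q (fun x y => tz t p ord0 x * tz t q d y) m n) =
   (fun m n => \sum_(p : I3) \sum_(q : I3) Rop p q ord0 d (hh q p) m n).
  by do 2 apply: functional_extensionality => ?; apply: RTT.
pose g := fun (x y : int) => zer (tser t ord0 ord0) x * zer (tser t ord0 d) y.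
have E2 : (fun m n => \sum_(p : I3) \sum_(q : I3)
     Rop ord0 ord0 p q (fun x y => tz t p ord0 x * tz t q d y) m n) =
   (fun m n => wop (wop1 g) m n - wop1 g m n).
  do 2 apply: functional_extensionality => ?.
  exact: (lhs_form (fun p q (x y : int) => zer (tser t p ord0) x * zer (tser t q d) y)).
rewrite -E E2.
rewrite phi_ww1 ?phi_base //; [exact: supp_pair | exact: supp_pair1].
Qed.

Lemma rhs_fun (P : (int -> int -> A) -> Prop) (d : I3) (R : int -> int -> A) :
  (forall m n, \sum_(p : I3) \sum_(q : I3) Rop p q ord0 d (hh q p) m n = R m n) ->
  (fun m n => \sum_(p : I3) \sum_(q : I3) Rop p q ord0 d (hh q p) m n) = R.
Proof. by move=> H; do 2 apply: functional_extensionality => ?; apply: H. Qed.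

Lemma rel0 N : mulser (x ord0) (Y ord0) N = mulser (Y ord0) (x ord0) N.
Proof.
have := rel_base ord0 N.
rewrite (rhs_fun xpredT (fun m n => rhs0 (fun p q => hh q p) m n)) /=.
rewrite phi_ww1; [| exact: supp_hh | exact: supp_hh1].
rewrite /hh phi_base2.
move/(congr1 (fun z => (2%:R / 3%:R : F) *: z)); rewrite !scalerA.
have -> : (2%:R / 3%:R * (3%:R / 2%:R) : F) = 1.
  by field; rewrite ?pnatr_eq0.
by rewrite !scale1r.
Qed.

Lemma rel1 N : (3%:R / 2%:R) *: mulser (x ord0) (Y o1) N =
  c *: mulser (Y o1) (x ord0) N + mulser (Y ord0) (x o1) N.
Proof.
rewrite rel_base (rhs_fun xpredT (fun m n => rhs1 (fun p q => hh q p) m n)) /=.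
rewrite phi_sub.
rewrite (phi_wop_s (supp_hh1 o1 ord0)) (phi_w1s (supp_hh o1 ord0)) (phi_w1s (supp_hh ord0 o1)).
rewrite /hh !phi_base2.
by rewrite scalerA mulrN1 opprK !scaleN1r opprK.
Qed.

Lemma rel2 N : (3%:R / 2%:R) *: mulser (x ord0) (Y o2) N =
  c *: mulser (Y o2) (x ord0) N + mulser (Y ord0) (x o2) N
  - c *: (mulser (Y o2) (x ord0) N + mulser (Y o1) (x o1) N + mulser (Y ord0) (x o2) N).
Proof.
rewrite rel_base (rhs_fun xpredT (fun m n => rhs2 (fun p q => hh q p) m n)) /=.
rewrite (phi_add (fun m n => wop (wop1 (hh o2 ord0)) m n - wop1 (hh ord0 o2) m n)).
rewrite phi_sub (phi_add3 (wop (hh o2 ord0)) (wop (hh o1 o1)) (wop (hh ord0 o2))).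
rewrite (phi_wop_s (supp_hh1 o2 ord0)).
rewrite (phi_wop_s (supp_hh o2 ord0)) (phi_wop_s (supp_hh o1 o1)) (phi_wop_s (supp_hh ord0 o2)).
rewrite (phi_w1s (supp_hh o2 ord0)) (phi_w1s (supp_hh ord0 o2)) /hh !phi_base2.
rewrite scalerA mulrN1 opprK scaleN1r opprK !scalerDr !scaleNr.
by rewrite !opprD.
Qed.
End Rel2.


Section ModL.
Variables (F : numClosedFieldType) (V : lmodType F).
Local Notation c := (2%:R^-1 : F).
Lemma two_neq0 : (2%:R : F) != 0. Proof. by rewrite pnatr_eq0. Qed.
Lemma three_neq0 : (3%:R : F) != 0. Proof. by rewrite pnatr_eq0. Qed.

Lemma L1 (a b d : V) : (3%:R / 2%:R) *: a = c *: b + d ->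
  d = (3%:R / 2%:R) *: a + (- c) *: b.
Proof. by move=> ->; rewrite scaleNr addrC addKr. Qed.

Lemma L2 (a b d e : V) : (3%:R / 2%:R) *: a = c *: b + d - c *: (b + e + d) ->
  3%:R *: a = d - e.
Proof.
move=> H.
have -> : a = (2%:R / 3%:R) *: ((3%:R / 2%:R) *: a).
  rewrite scalerA (_ : 2%:R / 3%:R * (3%:R / 2%:R) = 1 :> F) ?scale1r //.
  by field; rewrite ?pnatr_eq0.
rewrite H scalerA (_ : 3%:R * (2%:R / 3%:R) = 2%:R :> F); last by field; rewrite ?pnatr_eq0.
rewrite scalerBr scalerDr !scalerA (_ : 2%:R * c = 1 :> F); last by field; rewrite ?pnatr_eq0.
rewrite !scale1r scaler_nat mulr2n !opprD !addrA.
by rewrite (addrAC (b + d)) [b + d]addrC addrK (addrAC (d + d)) addrK.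
Qed.

Lemma L3 (A2 D2 M1 E : V) : 3%:R *: A2 = D2 - E ->
  3%:R *: A2 - D2 + 3%:R *: M1 - 2%:R *: ((3%:R / 2%:R) *: M1 + (- c) *: E) = 0.
Proof.
move=> ->; rewrite scalerDr !scalerA (_ : 2%:R * (3%:R / 2%:R) = 3%:R :> F); last by field; rewrite ?pnatr_eq0.
rewrite (_ : 2%:R * - c = -1 :> F); last by field; rewrite ?pnatr_eq0.
rewrite scaleN1r (addrAC D2) subrr add0r opprB addrACA addNr subrr addr0.
done.
Qed.
End ModL.


Lemma mulser_lin4 (F : numClosedFieldType) (A : algType F) (P s1 s2 s3 s4 : ser A) (a b d : F) N :
  mulser P (fun m => a *: s1 m - s2 m + b *: s3 m - d *: s4 m) N =
  a *: mulser P s1 N - mulser P s2 N + b *: mulser P s3 N - d *: mulser P s4 N.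
Proof.
rewrite /mulser !scaler_sumr -!sumrB -big_split -sumrB; apply: eq_bigr => i _.
by rewrite mulrBr mulrDr mulrBr -!scalerAr.
Qed.

Lemma gauss0 (F : numClosedFieldType) (A : algType F)
  (t : I3 -> I3 -> nat -> A) (k : I3 -> ser A) (e f : I3 -> I3 -> ser A) :
  gauss_decomp t k e f -> forall d, tser t ord0 d = mulser (k ord0) (Eser e ord0 d).
Proof.
move=> [_ [_ [_ G]]] d; apply: functional_extensionality => n; rewrite G.
rewrite !big_ord_recl big_ord0 /=.
have -> : Fser f ord0 ord0 = @dser F A by [].
have -> : Fser f ord0 (lift ord0 ord0) = (fun _ => 0) by [].
have -> : Fser f ord0 (lift ord0 (lift ord0 ord0)) = (fun _ => 0) by [].
by rewrite mul1ser !mul0ser !addr0.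
Qed.

End Aux.
Import Aux.

Theorem lemma3p8 (F : numClosedFieldType) (A : algType F)
  (t : I3 -> I3 -> nat -> A) (k : I3 -> ser A) (e f : I3 -> I3 -> ser A) :
  RTT_rel t -> unitary_rel t -> gauss_decomp t k e f ->
  forall n : nat,
    3%:R *: shift (2%:R^-1) (e (inord 0) (inord 2)) n
    - e (inord 0) (inord 2) n
    + 3%:R *: mulser (shift (2%:R^-1) (e (inord 0) (inord 1))) (e (inord 0) (inord 1)) n
    - 2%:R *: mulser (e (inord 0) (inord 1)) (e (inord 0) (inord 1)) n = 0.
Proof.
move=> RTT _ G.
have I0 : (inord 0 : 'I_3) = ord0 by apply: val_inj; rewrite /= inordK.
have I1 : (inord 1 : 'I_3) = o1 by apply: val_inj; rewrite /= inordK.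
have I2 : (inord 2 : 'I_3) = o2 by apply: val_inj; rewrite /= inordK.
rewrite I0 I1 I2.
have gx := gauss0 G.
have hE0 : Eser e ord0 ord0 = @dser F A by [].
have hE1 : Eser e ord0 o1 = e ord0 o1 by [].
have hE2 : Eser e ord0 o2 = e ord0 o2 by [].
have hX : tser t ord0 ord0 = k ord0 by rewrite gx hE0 mulser1.
have hx1 : tser t ord0 o1 = mulser (tser t ord0 ord0) (e ord0 o1) by rewrite gx hE1 hX.
have hx2 : tser t ord0 o2 = mulser (tser t ord0 ord0) (e ord0 o2) by rewrite gx hE2 hX.
set X := tser t ord0 ord0.
set c := (2%:R^-1 : F).
set Yh := shift c (z2 X).
have hY1 : shift c (z2 (tser t ord0 o1)) = mulser Yh (shift c (e ord0 o1)).
  by rewrite hx1 -mulser_z2 shift_mul.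
have hY2 : shift c (z2 (tser t ord0 o2)) = mulser Yh (shift c (e ord0 o2)).
  by rewrite hx2 -mulser_z2 shift_mul.
have R0 : mulser X Yh = mulser Yh X.
  by apply: functional_extensionality => N; apply: rel0.
have R1 := rel1 RTT.
have R2 := rel2 RTT.
set e1 := e ord0 o1. set e2 := e ord0 o2.
set Y1 := shift c (z2 (tser t ord0 o1)) in R1 R2 hY1.
set Y2 := shift c (z2 (tser t ord0 o2)) in R2 hY2.
set x1 := tser t ord0 o1 in R1 R2 hx1.
set x2 := tser t ord0 o2 in R2 hx2.
have hY0 : shift c (z2 (tser t ord0 ord0)) = Yh by [].
rewrite hY0 in R1 R2.
apply: (@mulser_cancel F A (mulser X Yh) (fun n => 3%:R *: shift c e2 n - e2 n +
    3%:R *: mulser (shift c e1) e1 n - 2%:R *: mulser e1 e1 n)).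
- by rewrite /mulser /Yh /shift !big_ord_recl !big_ord0 /= !(scaler0, addr0, mulr0, add0r, mul0r).
- by rewrite /mulser /Yh /shift !big_ord_recl !big_ord0 /= !(scaler0, addr0, mulr0, add0r, mul0r).
- rewrite /mulser /Yh /shift !big_ord_recl !big_ord0 /= !(scaler0, addr0, mulr0, add0r, mul0r).
  have X0 : X 0%N = 1 by rewrite /X /tser eqxx.
  have S22 : shc c 2 2 = 1.
    by rewrite /shc /= subnn expr0 bin0 mul1r mulr1.
  by change (X 0%N * (shc c 2 2 *: X 0%N) = 1); rewrite S22 scale1r X0 mulr1.
move=> N; rewrite mulser_lin4.
rewrite [mulser (mulser X Yh) (shift c e2)]mulserA -hY2.
rewrite (_ : mulser (mulser X Yh) e2 N = mulser Yh x2 N); last by rewrite R0 mulserA -hx2.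
rewrite (_ : mulser (mulser X Yh) (mulser (shift c e1) e1) N = mulser (mulser X Y1) e1 N); last first.
  by rewrite -mulserA (mulserA X Yh) -hY1.
rewrite (_ : mulser (mulser X Yh) (mulser e1 e1) N = mulser (mulser Yh x1) e1 N); last first.
  by rewrite -mulserA R0 (mulserA Yh X) -hx1.
have L : mulser Yh x1 = fun m => (3%:R / 2%:R) *: mulser X Y1 m + (- c) *: mulser Y1 X m.
  by apply: functional_extensionality => m; apply: L1; rewrite R1.
rewrite L mulser_linl (mulserA Y1 X) -hx1.
by apply: L3; apply: L2; rewrite R2.
Qed.
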